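(* Fix $m\in\{1,\dots,M\}$ and suppose $\varrho_h^{m-1}\in Q_h(\Omega)$, $\mathbf{u}_h^m\in\mathbf{V}_h(\Omega)$ are given bounded functions. Then the solution $\varrho_h^m\in Q_h(\Omega)$ of the discrete continuity scheme satisfies $$\min_{x\in\Omega}\varrho_h^m\ge\min_{x\in\Omega}\varrho_h^{m-1}\Big(\frac{1}{1+\Delta t\|\operatorname{div}_h\mathbf{u}_h^m\|_{L^\infty(\Omega)}}\Big).$$ Consequently, if $\varrho_h^{m-1}(\cdot)>0$ then $\varrho_h^m(\cdot)>0$.
   Context: $\Omega\subset\mathbb{R}^N$ ($N=2,3$) bounded polygonal domain; $E_h$ shape regular tetrahedral mesh, interior faces $\Gamma_h^I$; $Q_h(\Omega)$ piecewise constants; $\mathbf{V}_h(\Omega)$ Crouzeix–Raviart space with vanishing boundary face means; $\operatorname{div}_h$ elementwise divergence; $\Delta t>0$ the time step, $\partial_t^h\varrho^m=(\varrho^m-\varrho^{m-1})/\Delta t$. The discrete continuity scheme: $\int_\Omega\partial_t^h(\varrho_h^m)\phi_h\,dx=\Delta t\sum_{\Gamma\in\Gamma_h^I}\int_\Gamma(\varrho_-^m(\mathbf{u}_h^m\cdot\nu)_h^++\varrho_+^m(\mathbf{u}_h^m\cdot\nu)_h^-)[\phi_h]_\Gamma\,dS$ for all $\phi_h\in Q_h(\Omega)$, with $(\mathbf{u}_h\cdot\nu)_h^\pm=(\frac{1}{|\Gamma|}\int_\Gamma\mathbf{u}_h\cdot\nu\,dS)^\pm$, $a^+=\max(a,0)$,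 $a^-=\min(a,0)$, $\varrho_\pm$ the traces from the two elements sharing $\Gamma$ ($\nu$ points from $E_-$ to $E_+$), $[\cdot]_\Gamma$ the jump.
   Formalization: The lower bound on $\min_{x\in\Omega}\varrho_h^m$ holds only for nonnegative $\varrho_h^{m-1}$, the right side of the scheme carries no factor Δt, and the jump $[\phi_h]_\Gamma$ is the value of $\phi_h$ on E₊ minus its value on E₋. Each condition added here is assumed in the paper as well or is needed for the statement above to hold. This also corrects a misprint. *)

(* Defs.v *)
From HB Require Import structures.
From mathcomp Require Import all_boot all_order all_algebra.
Set Implicit Arguments. Unset Strict Implicit. Unset Printing Implicit Defensive.
Import Order.TTheory GRing.Theory Num.Theory.
Local Open Scope ring_scope.

(* Every face has an
   element [eminus] it belongs to; interior faces (in Gamma_h^I) additionally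
   have a distinct neighbouring element [eplus]; the unit normal nu of a face
   points from [eminus] to [eplus] (outward from [eminus] for boundary faces). *)
Record mesh (R : realFieldType) := Mesh {
  elt : finType;
  face : finType;
  elt0 : elt;
  vol : elt -> R;
  vol_gt0 : forall E, 0 < vol E;
  area : face -> R;
  area_gt0 : forall G, 0 < area G;
  interior : pred face;
  eminus : face -> elt;
  eplus : face -> elt;
  eplus_neq : forall G, interior G -> eplus G != eminus G
}.

Section MeshDefs.
Variables (R : realFieldType) (T : mesh R).

(* Q_h(Omega): piecewise constants = one value per element *)
Definition Qh := elt T -> R.

(* A velocity u_h is recorded through its face means of the normal component,
   un G = (1/|G|) \int_G u_h . nu dS  (for CR functions this is single valued
   on interior faces). *)
Definition Vh (un : face T -> R) : Prop :=
  forall G, ~~ interior G -> un G = 0.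

(* Elementwise divergence div_h u_h on E = (1/|E|) \int_{dE} u_h . n_E dS
   (u_h is affine on E, so its divergence is constant on E). *)
Definition divh (un : face T -> R) (E : elt T) : R :=
  (vol E)^-1 *
  (\sum_(G : face T | eminus G == E) area G * un G
   - \sum_(G : face T | interior G && (eplus G == E)) area G * un G).

Definition posp (a : R) : R := Num.max a 0.
Definition negp (a : R) : R := Num.min a 0.

Definition intQ (f : Qh) : R := \sum_(E : elt T) vol E * f E.

Definition jump (phi : Qh) (G : face T) : R := phi (eplus G) - phi (eminus G).

Definition scheme (dt : R) (rho_old rho : Qh) (un : face T -> R) : Prop :=
  forall phi : Qh,
    intQ (fun E => (rho E - rho_old E) / dt * phi E)
    = \sum_(G : face T | interior G)
        area G * (rho (eminus G) * posp (un G) + rho (eplus G) * negp (un G))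
        * jump phi G.

Definition minQ (f : Qh) : R := \big[Num.min/f (elt0 T)]_(E : elt T) f E.

Definition LinfQ (f : Qh) : R := \big[Num.max/0]_(E : elt T) `|f E|.

End MeshDefs.

(* Main.v *)
Require Import Defs.
From mathcomp Require Import all_boot all_order all_algebra.
From mathcomp Require Import ring lra.
Import Order.TTheory GRing.Theory Num.Theory.
Local Open Scope ring_scope.

Section Proofs.
Variables (R : realFieldType) (T : mesh R).

Lemma posp_ge0 (a : R) : 0 <= posp a.
Proof. by rewrite /posp le_max lexx orbT. Qed.
Lemma negp_le0 (a : R) : negp a <= 0.
Proof. by rewrite /negp ge_min lexx orbT. Qed.
Lemma posp_negp (a : R) : posp a + negp a = a.
Proof. by rewrite /posp /negp addr_max_min addr0. Qed.

Lemma rho_nonneg (dt : R) (rho_old rho : Qh T) (un : face T -> R) :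
  0 < dt -> scheme dt rho_old rho un -> (forall E, 0 <= rho_old E) ->
  forall E, 0 <= rho E.
Proof.
move=> dt0 Hs Hold E0; rewrite leNgt; apply/negP => HE0.
have := Hs (fun E => if rho E < 0 then 1 else 0).
rewrite /intQ (bigD1 E0) //= HE0 => Heq.
have L1 : vol E0 * ((rho E0 - rho_old E0) / dt * 1) < 0.
  rewrite mulr1 pmulr_rlt0; last exact: vol_gt0.
  rewrite pmulr_llt0; last by rewrite invr_gt0.
  by have := Hold E0; lra.
have L2 : \sum_(i | i != E0) vol i * ((rho i - rho_old i) / dt *
            (if rho i < 0 then 1 else 0)) <= 0.
  apply: sumr_le0 => i _; case: ifP => Hi; last by rewrite !mulr0.
  rewrite mulr1; apply: mulr_ge0_le0; first exact/ltW/vol_gt0.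
  apply: mulr_le0_ge0; last by rewrite invr_ge0 ltW.
  by have := Hold i; lra.
have L3 : 0 <= \sum_(G | interior G)
    area G * (rho (eminus G) * posp (un G) + rho (eplus G) * negp (un G)) *
    jump (fun E => if rho E < 0 then 1 else 0) G.
  apply: sumr_ge0 => G _; rewrite /jump.
  have hA := area_gt0 G; have hp := posp_ge0 (un G); have hn := negp_le0 (un G).
  case: ifP => Hp; case: ifP => Hm; rewrite ?subrr ?mulr0 //.
  - rewrite subr0 mulr1; apply: mulr_ge0; first exact: ltW.
    apply: addr_ge0; first by apply: mulr_ge0 => //; rewrite leNgt Hm.
    by apply: mulr_le0 => //; exact: ltW.
  - rewrite sub0r mulrN1 -mulrN; apply: mulr_ge0; first exact: ltW.
    rewrite opprD; apply: addr_ge0.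
      by rewrite -mulNr; apply: mulr_ge0 => //; rewrite oppr_ge0 ltW.
    rewrite -mulNr; apply: mulr_le0 => //; rewrite oppr_le0 leNgt Hp //.
move: L1 L2 L3; rewrite -Heq; lra.
Qed.

Lemma minQ_le (f : Qh T) E : minQ f <= f E.
Proof. by rewrite /minQ (bigD1 E) //= ge_min lexx. Qed.

Lemma minQ_ex (f : Qh T) : exists E, minQ f = f E.
Proof.
rewrite /minQ; apply: (big_ind (fun x => exists E, x = f E)).
- by exists (elt0 T).
- move=> x y [E1 ->] [E2 ->]; rewrite /Num.min.
  by case: ifP => _; [exists E1 | exists E2].
- by move=> E _; exists E.
Qed.

Lemma LinfQ_ge (f : Qh T) E : `|f E| <= LinfQ f.
Proof. by rewrite /LinfQ (bigD1 E) //= le_max lexx. Qed.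

Lemma LinfQ_ge0 (f : Qh T) : 0 <= LinfQ f.
Proof. exact: le_trans (normr_ge0 _) (LinfQ_ge f (elt0 T)). Qed.


Lemma divh_jump (un : face T -> R) E0 : Vh un ->
  vol E0 * divh un E0 = - \sum_(G | interior G) area G * un G *
     jump (fun E => if E == E0 then 1 else 0) G.
Proof.
move=> Hv; rewrite /divh mulrA mulfV ?mul1r; last exact/lt0r_neq0/vol_gt0.
rewrite /jump (eq_bigr _ (fun G _ => mulrBr _ _ _)) sumrB opprB.
congr (_ - _).
  rewrite (bigID (@interior R T)) /= [X in _ + X]big1 ?addr0; last first.
    by move=> G /andP [_ HG]; rewrite (Hv G HG) mulr0.
  rewrite big_mkcond [RHS]big_mkcond /=; apply: eq_bigr => G _.
  by case: (interior G); case: (eminus G == E0); rewrite /= ?mulr1 ?mulr0.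
rewrite big_mkcond [RHS]big_mkcond /=; apply: eq_bigr => G _.
by case: (interior G); case: (eplus G == E0); rewrite /= ?mulr1 ?mulr0.
Qed.

Lemma key (dt : R) (rho_old rho : Qh T) (un : face T -> R) E0 :
  Vh un -> scheme dt rho_old rho un -> (forall E, rho E0 <= rho E) ->
  - rho E0 * (vol E0 * divh un E0) <= vol E0 * ((rho E0 - rho_old E0) / dt).
Proof.
move=> Hv Hs Hmin.
have := Hs (fun E => if E == E0 then 1 else 0).
rewrite /intQ (bigD1 E0) //= eqxx mulr1 big1 ?addr0; last first.
  by move=> E /negPf ->; rewrite !mulr0.
move=> ->; rewrite divh_jump // mulNr mulrN opprK mulr_sumr.
apply: ler_sum => G HG; rewrite /jump.
have hA := area_gt0 G; have hp := posp_ge0 (un G); have hn := negp_le0 (un G).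
have hu := posp_negp (un G).
have hne := eplus_neq HG.
set p := posp (un G) in hp hu *; set n := negp (un G) in hn hu *.
case: eqP => Hp; case: eqP => Hm; rewrite ?subrr ?mulr0 //.
- rewrite -hu Hp.
  have h1 : 0 <= area G * ((rho (eminus G) - rho E0) * p).
    apply: mulr_ge0; first exact: ltW.
    by apply: mulr_ge0 => //; rewrite subr_ge0.
  nra.
- rewrite -hu Hm.
  have h1 : 0 <= area G * ((rho (eplus G) - rho E0) * - n).
    apply: mulr_ge0; first exact: ltW.
    by apply: mulr_ge0; rewrite ?subr_ge0 ?oppr_ge0.
  nra.
Qed.

End Proofs.

Theorem lemma3p3 (R : realFieldType) (T : mesh R) (dt : R)
    (rho_old rho : Qh T) (un : face T -> R) :
  0 < dt -> Vh un -> scheme dt rho_old rho un ->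
  ((forall E, 0 <= rho_old E) ->
     minQ rho >= minQ rho_old * (1 + dt * LinfQ (divh un))^-1)
  /\ ((forall E, 0 < rho_old E) -> forall E, 0 < rho E).
Proof.
move=> dt0 Hv Hs.
have [E0 HE0] := @minQ_ex R T rho.
have Hmin : forall E, rho E0 <= rho E by move=> E; rewrite -HE0 minQ_le.
have K := @key R T dt rho_old rho un E0 Hv Hs Hmin.
set m := rho E0 in K Hmin HE0 *; set d := divh un E0 in K.
set v := vol E0 in K; set o := rho_old E0 in K.
have hv : 0 < v by exact: vol_gt0.
have K2 : o <= m * (1 + dt * d).
  set X := (m - o) / dt in K.
  have hX : m - o = X * dt by rewrite /X mulfVK // lt0r_neq0.
  have : - m * d <= X.
    by rewrite -(ler_pM2l hv) mulrA (mulrC v) -mulrA.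
  move=> h; have h2 : - m * d * dt <= X * dt by rewrite ler_pM2r.
  nra.
split.
- move=> Hold.
  have hm : 0 <= m by apply: (@rho_nonneg R T dt rho_old rho un dt0 Hs Hold).
  have hL := @LinfQ_ge R T (divh un) E0.
  have hL0 := @LinfQ_ge0 R T (divh un).
  have hd : d <= LinfQ (divh un) by exact: le_trans (ler_norm _) hL.
  have hpos : 0 < 1 + dt * LinfQ (divh un).
    by have := mulr_ge0 (ltW dt0) hL0; lra.
  rewrite HE0 ler_pdivrMr //.
  have h3 : 0 <= m * dt * (LinfQ (divh un) - d).
    by apply: mulr_ge0; [apply: mulr_ge0 => //; exact: ltW | rewrite subr_ge0].
  have ho : minQ rho_old <= o by exact: minQ_le.
  nra.
- move=> Hold E.
  have hm : 0 <= m by apply: (@rho_nonneg R T dt rho_old rho un dt0 Hs) => E'; exact: ltW.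
  apply: lt_le_trans (Hmin E).
  rewrite lt_neqAle hm andbT; apply/eqP => m0.
  have := Hold E0; rewrite -/o; move: K2; rewrite -m0 mul0r; lra.
Qed.
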